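(* Let $(\sigma,(\mu^B_m))$ be an equilibrium of the disclosure game described in the context. Then there exists $q^*\in Q$ such that $q^B_x=q^*$ for almost every $x\in X$ with $\sigma(x)=\varnothing$.
   Context: Let $0<q_\ell<q_h<\infty$, $Q=[q_\ell,q_h]$, and let $c$ be a real number with $0<c<q_\ell$. Let $F$ be a probability distribution on $[0,1]$ with support $[0,1]$ admitting a twice continuously differentiable density $f:(0,1)\to\mathbb{R}_{>0}$. Define $r(v)=(1-F(v))/f(v)$ and $\psi(v)=v-r(v)$ on $(0,1)$, and assume $\psi'(v)>0$ whenever $\psi(v)>0$. For $q\in Q$, $p(q)$ is the unique maximizer over $p\in\mathbb{R}$ of $(p-c)\big(1-F(p/q)\big)$, and let $R(q)=(p(q)-c)\big(1-F(p(q)/q)\big)$. The quality $q$ is drawn from a prior $\mu\in\Delta(Q)$ with support $Q$. Seller's information structure $(X,\pi^S)$ consists of a measurable signal space $X$ with $\varnothing\notin X$ and $\pi^S:Q\to\Delta(X)$; on observing $x$, Seller forms the Bayesian posterior $\mu^S_x$; ''almost every $x$'' refers to the marginal distribution of the signal. A disclosure strategy is a measurable $\sigma:X\to X\cup\{\varnothing\}$ with $\sigma(x)\in\{x,\varnothing\}$ for all $x$. Buyer's beliefs are $(\mu^B_m)_{m\in X\cup\{\varnothing\}}$ with posterior means $q^B_m=\mathbb{E}_{\mu^B_m}[q]$. A pair $(\sigma,(\mu^B_m))$ is an equilibrium if (i) for every $x\in X$, $\sigma(x)\in\arg\max_{m\in\{x,\varnothing\}} R(q^B_m)$; and (ii)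 $\mu^B_m=\mu^S_m$ for $m\in X$, and $\mu^B_\varnothing=\mathbb{E}[\mu^S_x\mid\sigma(x)=\varnothing]$ when this conditional expectation is well defined (otherwise $\mu^B_\varnothing$ is arbitrary). *)

(* Defs.v *)
From HB Require Import structures.
From mathcomp Require Import all_boot all_order all_algebra.
From mathcomp Require Import all_classical all_reals all_analysis.
From mathcomp Require Import measurable_realfun.
Set Implicit Arguments. Unset Strict Implicit. Unset Printing Implicit Defensive.
Import Order.TTheory GRing.Theory Num.Theory.
Import numFieldNormedType.Exports.
Local Open Scope classical_set_scope.
Local Open Scope ring_scope.

Section defs.
Context {R : realType}.

Definition profit (F : R -> R) (c q p : R) : R := (p - c) * (1 - F (p / q)).

Definition unique_maximizer (F : R -> R) (c q pq : R) : Prop :=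
  (forall p', profit F c q p' <= profit F c q pq) /\
  (forall p', (forall p'', profit F c q p'' <= profit F c q p') -> p' = pq).

Definition revenue (F : R -> R) (c : R) (p : R -> R) (q : R) : R :=
  profit F c q (p q).

Definition hazr (F f : R -> R) (v : R) : R := (1 - F v) / f v.
Definition psi (F f : R -> R) (v : R) : R := v - hazr F f v.

Definition cdf_with_density (F f : R -> R) : Prop :=
  (forall v, v <= 0 -> F v = 0) /\
  (forall v, 1 <= v -> F v = 1) /\
  (forall v, 0 <= v <= 1 ->
     (F v)%:E = (\int[lebesgue_measure]_(x in `[0%R, v]) (f x)%:E)%E).

Definition positive_C2_on01 (f : R -> R) : Prop :=
  forall v, 0 < v < 1 ->
    [/\ 0 < f v, derivable f v 1, derivable (derive1 f) v 1
      & {for v, continuous (derive1 (derive1 f))}].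

Definition support_is (mu : probability R R) (a b : R) : Prop :=
  mu `[a, b]%classic = 1%E /\
  (forall x, a <= x <= b -> forall e : R, 0 < e -> (0 < mu (ball x e))%E).

Definition pmean (nu : probability R R) : R :=
  fine (\int[nu]_q (q%:E))%E.

Variables (d : measure_display) (X : measurableType d).

Definition marg (ql qh : R) (mu : probability R R) (pi : R -> probability X R)
  (B : set X) : \bar R :=
  (\int[mu]_(q in `[ql, qh]%classic) pi q B)%E.

Definition marg_int (ql qh : R) (mu : probability R R) (pi : R -> probability X R)
  (B : set X) (g : X -> \bar R) : \bar R :=
  (\int[mu]_(q in `[ql, qh]%classic) \int[pi q]_(x in B) g x)%E.

End defs.

(* Main.v *)
Require Import Defs.
From HB Require Import structures.
From mathcomp Require Import all_boot all_order all_algebra.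
From mathcomp Require Import all_classical all_reals all_analysis.
From mathcomp Require Import measurable_realfun.
Import Order.TTheory GRing.Theory Num.Theory.
Import numFieldNormedType.Exports.
Local Open Scope classical_set_scope.
Local Open Scope ring_scope.
From mathcomp Require Import lra.
Set Implicit Arguments. Unset Strict Implicit. Unset Printing Implicit Defensive.

Section Fpart.
Context {R : realType}.
Local Notation leb := (@lebesgue_measure R).

Lemma mf01 (f : R -> R) : positive_C2_on01 f -> measurable_fun (`]0%R, 1%R[%classic : set R) f.
Proof.
move=> hf; apply: open_continuous_measurable_fun; first exact: interval_open.
move=> x /[1!inE] /=; rewrite in_itv /= => x01.
have [_ dx _ _] := hf x x01.
by apply/differentiable_continuous; rewrite -derivable1_diffP.
Qed.

Lemma F_int (F f : R -> R) : cdf_with_density F f -> positive_C2_on01 f ->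
  forall v, 0 < v <= 1 -> (F v)%:E = (\int[leb]_(x in (`]0%R, v[%classic : set R)) (f x)%:E)%E.
Proof.
move=> [_ [_ hF]] hf v /andP[v0 v1].
rewrite hF ?v1 ?ltW//.
rewrite (@integral_itv_bndoo _ 0%R v _ true false)//.
apply/measurable_EFinP; apply: measurable_funS (mf01 hf) => //.
by apply: subset_itv; rewrite bnd_simp.
Qed.

Lemma int_pos (f : R -> R) : positive_C2_on01 f -> forall a b, 0 <= a -> a < b -> b <= 1 ->
  (0 < \int[leb]_(x in (`]a, b[%classic : set R)) (f x)%:E)%E.
Proof.
move=> hf a b a0 ab b1.
have sub : (`]a, b[%classic : set R) `<=` `]0%R, 1%R[.
  by apply: subset_itv; rewrite bnd_simp.
have fpos x : (`]a, b[%classic : set R) x -> 0 < f x.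
  by move=> /sub /=; rewrite in_itv /= => /(hf x) [].
have mf : measurable_fun (`]a, b[%classic : set R) (fun x => (f x)%:E).
  by apply/measurable_EFinP; apply: measurable_funS (mf01 hf).
rewrite lt0e integral_ge0 ?andbT; last by move=> x /fpos /ltW; rewrite lee_fin.
apply/eqP => h0.
have : (\int[leb]_(x in (`]a, b[%classic : set R)) `|(f x)%:E|)%E = 0%E.
  rewrite -h0; apply: eq_integral => x /[1!inE] /fpos /ltW f0.
  by rewrite gee0_abs // lee_fin.
move=> habs.
have := (ae_eq_integral_abs leb (measurable_itv _) mf).1 habs.
rewrite /ae_eq /almost_everywhere /=.
move=> [N [mN N0 sN]].
have : (leb (`]a, b[%classic : set R) <= leb N)%E.
  apply: le_measure; rewrite ?inE //.
  move=> x ax; apply: sN => /= h.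
  have := fpos x ax; rewrite -lte_fin h ?inE // ltxx //.
rewrite N0 lebesgue_measure_itv /= lte_fin ab -EFinB lee_fin subr_le0 leNgt.
by rewrite ab.
Qed.

Lemma F_lt (F f : R -> R) : cdf_with_density F f -> positive_C2_on01 f ->
  forall a b, 0 < a -> a < b -> b <= 1 -> F a < F b.
Proof.
move=> hF hf a b a0 ab b1.
have mf : measurable_fun (`]0%R, 1%R[%classic : set R) (fun x => (f x)%:E).
  by apply/measurable_EFinP; exact: (mf01 hf).
rewrite -lte_fin (F_int hF hf) ?a0 ?(ltW (lt_le_trans ab b1)) //.
rewrite (F_int hF hf) ?b1 ?(lt_trans a0 ab) //.
rewrite (itv_bndbnd_setU (a:=BRight 0%R) (x:=BRight a) (y:=BLeft b)) ?bnd_simp ?(ltW a0) ?ab //.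
rewrite ge0_integral_setU //; last 3 first.
- apply: measurable_funS mf => //; rewrite -(itv_bndbnd_setU (a:=BRight 0%R) (x:=BRight a) (y:=BLeft b)) ?bnd_simp ?(ltW a0) ?ab //.
  by apply: subset_itv; rewrite bnd_simp.
- move=> x; rewrite -(itv_bndbnd_setU (a:=BRight 0%R) (x:=BRight a) (y:=BLeft b)) ?bnd_simp ?(ltW a0) ?ab // => /= xb.
  have : `]0%R, 1%R[%classic x.
    by move: x xb; apply: subset_itv; rewrite bnd_simp.
  by rewrite /= in_itv /= => /(hf x) [fx0 _ _ _]; change (0%:E <= (f x)%:E)%E; rewrite lee_fin ltW.
- apply/disj_setPS => x [] /=; rewrite !in_itv /= => /andP[_ xa] /andP[ax _].
  by move: (lt_le_trans ax xa); rewrite ltxx.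
rewrite (@integral_itv_bndoo _ 0%R a _ false false); last first.
  by apply: measurable_funS mf => //; apply: subset_itv; rewrite bnd_simp ?(ltW a0) ?(ltW (lt_le_trans ab b1)).
have fin : (\int[leb]_(x in (`]0%R, a[%classic : set R)) (f x)%:E)%E \is a fin_num.
  by rewrite -(F_int hF hf) // a0 ltW // (lt_le_trans ab b1).
by rewrite lteDl // int_pos // ltW.
Qed.

Lemma F_le1 (F f : R -> R) : cdf_with_density F f -> positive_C2_on01 f ->
  forall v, F v <= 1.
Proof.
move=> hF hf v; have [v0|v0] := leP v 0; first by rewrite hF.1.
have [v1|v1] := leP 1 v; first by rewrite hF.2.1.
by rewrite -(hF.2.1 1 (lexx _)) ltW // (F_lt hF hf).
Qed.

Lemma F_lt1 (F f : R -> R) : cdf_with_density F f -> positive_C2_on01 f ->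
  forall v, 0 < v -> v < 1 -> F v < 1.
Proof.
move=> hF hf v v0 v1.
by rewrite -(hF.2.1 1 (lexx _)) (F_lt hF hf).
Qed.

Lemma rev_lt (F f p : R -> R) (c ql qh : R) : cdf_with_density F f -> positive_C2_on01 f ->
  0 < c -> c < ql ->
  (forall q, ql <= q <= qh -> unique_maximizer F c q (p q)) ->
  forall q1 q2, ql <= q1 -> q1 < q2 -> q2 <= qh ->
  revenue F c p q1 < revenue F c p q2.
Proof.
move=> hF hf c0 cql um q1 q2 lq1 q12 q2h.
have q1Q : ql <= q1 <= qh by rewrite lq1 ltW // (lt_le_trans q12 q2h).
have q2Q : ql <= q2 <= qh by rewrite q2h ltW // (le_lt_trans lq1 q12).
have q10 : 0 < q1 by rewrite (lt_le_trans (lt_trans c0 cql)).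
have q20 : 0 < q2 by rewrite (lt_trans q10 q12).
have cq1 : c < q1 by rewrite (lt_le_trans cql).
set P := p q1.
have hmax1 := (um q1 q1Q).1.
have hmax2 := (um q2 q2Q).1.
set p0 := (c + q1) / 2.
have p0c : 0 < p0 - c by rewrite /p0; lra.
have p0q : p0 < q1 by rewrite /p0; lra.
have pos0 : 0 < profit F c q1 p0.
  rewrite /profit mulr_gt0 // subr_gt0 (F_lt1 hF hf) //.
    by rewrite divr_gt0 //; lra.
  by rewrite ltr_pdivrMr // mul1r.
have posP : 0 < profit F c q1 P by rewrite (lt_le_trans pos0) // hmax1.
have F1 : F (P / q1) < 1.
  rewrite lt_neqAle (F_le1 hF hf) andbT; apply/eqP => h.
  by move: posP; rewrite /profit h subrr mulr0 ltxx.
have Pc : 0 < P - c.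
  by move: posP; rewrite /profit pmulr_lgt0 // subr_gt0.
have P0 : 0 < P by lra.
have Pq1 : P / q1 < 1.
  rewrite ltNge; apply/negP => h.
  by move: F1; rewrite hF.2.1 // ltxx.
have lt12 : P / q2 < P / q1.
  by rewrite ltr_pM2l // ltf_pV2 // posrE.
have Flt : F (P / q2) < F (P / q1).
  by apply: (F_lt hF hf) => //; [rewrite divr_gt0 | rewrite ltW].
apply: (lt_le_trans _ (hmax2 P)).
rewrite /revenue /profit -/P ltr_pM2l //; lra.
Qed.

Lemma rev_le_le (F f p : R -> R) (c ql qh : R) : cdf_with_density F f -> positive_C2_on01 f ->
  0 < c -> c < ql ->
  (forall q, ql <= q <= qh -> unique_maximizer F c q (p q)) ->
  forall q1 q2, ql <= q1 <= qh -> ql <= q2 <= qh ->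
  revenue F c p q1 <= revenue F c p q2 -> q1 <= q2.
Proof.
move=> hF hf c0 cql um q1 q2 /andP[l1 h1] /andP[l2 h2] hr.
rewrite leNgt; apply/negP => q21.
have := rev_lt hF hf c0 cql um l2 q21 h1.
by rewrite ltNge hr.
Qed.
End Fpart.

Section Mix.
Context {R : realType}.
Import HBNNSimple.
Local Open Scope ereal_scope.

Lemma int_nnsfun d (Z : measurableType d) (m : measure Z R) (f : {nnsfun Z >-> R}) :
  \int[m]_z (f z)%:E = \sum_(r \in range f) r%:E * m (f @^-1` [set r]).
Proof. by rewrite integral_nnsfun // patch_setT sintegralE. Qed.

Lemma range_ge0 d (Z : measurableType d) (f : {nnsfun Z >-> R}) r :
  r \in range f -> (0 <= r)%R.
Proof. by rewrite inE => -[z _ <-]. Qed.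

Lemma intZ_fsum d (Y : measurableType d) (m : measure Y R) (E : set Y) (mE : measurable E)
  (A : set R) (fA : finite_set A)
  (G : R -> Y -> \bar R) :
  (forall r, measurable_fun setT (G r)) -> (forall r y, 0 <= G r y) ->
  (forall r, (r < 0)%R -> forall y, G r y = 0) ->
  \int[m]_(y in E) (\sum_(r \in A) r%:E * G r y) = \sum_(r \in A) r%:E * \int[m]_(y in E) G r y.
Proof.
move=> mG' G0 Gn.
have mG r : measurable_fun E (G r) by exact: measurable_funTS.
have ge0 r y : 0 <= r%:E * G r y.
  have [r0|r0] := leP 0%R r; first by rewrite mule_ge0.
  by rewrite Gn // mule0.
rewrite ge0_integral_fsum //; last by move=> r; exact: measurable_funeM.
apply: eq_fsbigr => r _.
have [r0|r0] := leP 0%R r; first by rewrite ge0_integralZl.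
under eq_integral do rewrite Gn // mule0.
rewrite integral0; under eq_integral do rewrite Gn //.
by rewrite integral0 mule0.
Qed.

Lemma mker dY dX (Y : measurableType dY) (X : measurableType dX) (S1 : Y -> measure X R) :
  (forall U, measurable U -> measurable_fun setT (fun y => S1 y U)) ->
  forall D, measurable D -> forall k : X -> \bar R, (forall x, 0 <= k x) -> measurable_fun setT k ->
  measurable_fun setT (fun y => \int[S1 y]_(x in D) k x).
Proof.
move=> m1 D mD k k0 mk.
under eq_fun do rewrite integral_mkcond.
apply: (measurable_fun_integral_kernel m1).
- by move=> x; rewrite /patch; case: ifP.
- by apply/(measurable_restrictT k mD); exact: measurable_funTS.
Qed.

Lemma mix2 dY dX dZ (Y : measurableType dY) (X : measurableType dX) (Z : measurableType dZ)
  (lam : measure Y R) (S1 : Y -> measure X R) (S2 : X -> measure Z R) (nu : measure Z R) :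
  (forall U, measurable U -> measurable_fun setT (fun y => S1 y U)) ->
  (forall U, measurable U -> measurable_fun setT (fun x => S2 x U)) ->
  forall E D, measurable E -> measurable D ->
  (forall U, measurable U -> nu U = \int[lam]_(y in E) \int[S1 y]_(x in D) S2 x U) ->
  forall phi, (forall z, 0 <= phi z) -> measurable_fun setT phi ->
  \int[nu]_z phi z = \int[lam]_(y in E) \int[S1 y]_(x in D) \int[S2 x]_z phi z.
Proof.
move=> m1 m2 E D mE mD hnu.
have mS2 U : measurable U -> forall x, 0 <= S2 x U by [].
have hs (f : {nnsfun Z >-> R}) :
    \int[nu]_z (f z)%:E = \int[lam]_(y in E) \int[S1 y]_(x in D) \int[S2 x]_z (f z)%:E.
  have fA : finite_set (range f) by exact: fimfunP.
  have Am r : measurable (f @^-1` [set r]) by exact: measurable_sfunP.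
  have An r : (r < 0)%R -> f @^-1` [set r] = set0 by exact: preimage_nnfun0.
  rewrite int_nnsfun.
  under eq_integral => y _.
    under eq_integral => x _ do rewrite int_nnsfun.
    rewrite (@intZ_fsum _ _ _ _ mD _ fA (fun r x => S2 x (f @^-1` [set r]))) //.
    - over.
    - by move=> r; exact: m2.
    - by move=> r /An rn x; rewrite rn measure0.
  rewrite /= (@intZ_fsum _ _ _ _ mE _ fA (fun r y => \int[S1 y]_(x in D) S2 x (f @^-1` [set r]))) //.
  - by apply: eq_fsbigr => r _; rewrite hnu.
  - by move=> r; apply: (mker m1 mD) => //; exact: m2.
  - by move=> r y; apply: integral_ge0.
  - by move=> r /An rn y; under eq_integral do rewrite rn measure0; rewrite integral0.
move=> phi phi0 mphi.
pose f_ := nnsfun_approx measurableT mphi.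
have cf z : (f_ n z)%:E @[n --> \oo] --> phi z.
  exact: (cvg_nnsfun_approx measurableT mphi (fun z _ => phi0 z) (I : setT z)).
have nd z n m : (n <= m)%N -> (f_ n z <= f_ m z)%R.
  by move=> nm; exact/lefP/nd_nnsfun_approx.
have limf (m : measure Z R) : \int[m]_z phi z = limn (fun n => \int[m]_z (f_ n z)%:E).
  transitivity (\int[m]_z (fun z => limn (fun n => (f_ n z)%:E)) z).
    by apply: eq_integral => z _; apply/esym/cvg_lim => //; exact: cf.
  apply: monotone_convergence => //.
  - by move=> n; exact/measurable_EFinP.
  - by move=> n z _; rewrite lee_fin.
  - by move=> z _ a b ab; rewrite lee_fin; exact: nd.
pose H n x := \int[S2 x]_z (f_ n z)%:E.
pose G n y := \int[S1 y]_(x in D) H n x.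
have mH n : measurable_fun setT (H n).
  apply: (measurable_fun_integral_kernel m2) => //.
  - by move=> z; rewrite lee_fin.
  - exact/measurable_EFinP.
have H0 n x : 0 <= H n x by apply: integral_ge0 => z _; rewrite lee_fin.
have ndH x n m : (n <= m)%N -> H n x <= H m x.
  move=> nm; apply: ge0_le_integral => //.
  all: try (by move=> z _; rewrite lee_fin).
  all: try (exact/measurable_EFinP).
  by move=> z _; rewrite lee_fin; exact: nd.
have mG n : measurable_fun setT (G n).
  exact: (mker m1 mD).
have G0 n y : 0 <= G n y by apply: integral_ge0 => x _.
have ndG y n m : (n <= m)%N -> G n y <= G m y.
  move=> nm; apply: ge0_le_integral => //.
  all: try (by move=> x _; exact: H0).
  all: try (exact: measurable_funTS (mH _)).
  by move=> x _; exact: ndH.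
have limG y : \int[S1 y]_(x in D) \int[S2 x]_z phi z = limn (G ^~ y).
  under eq_integral do rewrite limf.
  apply: monotone_convergence => //.
  all: try (by move=> n; exact: measurable_funTS (mH n)).
  all: try (by move=> n x _; exact: H0).
  by move=> x _ a b ab; exact: ndH.
under [RHS]eq_integral do rewrite limG.
rewrite monotone_convergence //.
all: try (by move=> n; exact: measurable_funTS (mG n)).
all: try (by move=> n x _; exact: G0).
2: by move=> y _ a b ab; exact: ndG.
rewrite limf; congr (limn _); apply/funext => n.
by rewrite hs.
Qed.
End Mix.

Section Clamp.
Context {R : realType}.
Local Open Scope ereal_scope.

Definition clamp (ql qh : R) (q : R) : R := Num.min (Num.max q ql) qh.

Lemma clamp_id (ql qh q : R) : (ql <= q <= qh)%R -> clamp ql qh q = q.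
Proof. by move=> /andP[a b]; rewrite /clamp (max_l a) (min_l b). Qed.

Lemma clamp_ge (ql qh q : R) : (ql <= qh)%R -> (ql <= clamp ql qh q)%R.
Proof. by move=> h; rewrite /clamp le_min h le_max lexx orbT. Qed.

Lemma clamp_le (ql qh q : R) : (clamp ql qh q <= qh)%R.
Proof. by rewrite /clamp ge_min lexx orbT. Qed.

Lemma mclamp (ql qh : R) : measurable_fun setT (fun q => (clamp ql qh q)%:E).
Proof.
apply/measurable_EFinP.
have -> : clamp ql qh = ((id \max cst ql) \min cst qh)%R by [].
by apply: measurable_minr => //; apply: measurable_maxr.
Qed.

Lemma pmean_clamp (ql qh : R) (nu : probability R R) : nu `[ql, qh]%classic = 1 ->
  \int[nu]_q (q%:E) = \int[nu]_q (clamp ql qh q)%:E.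
Proof.
move=> h1; apply: ae_eq_integral => //.
- exact: mclamp.
exists (~` `[ql, qh]%classic); split.
- by apply: measurableC; exact: measurable_itv.
- by have := probability_setC nu (measurable_itv `[ql, qh]); rewrite h1 subee.
- by move=> x hx xQ; apply: hx => _; rewrite clamp_id.
Qed.

Lemma int_cst_prob d (T : measurableType d) (P : probability T R) (r : R) :
  \int[P]_x (r%:E) = r%:E.
Proof. rewrite integral_cst // -[RHS]mule1; congr (_ * _); exact: probability_setT. Qed.


Lemma clamp_bounds (ql qh : R) (nu : probability R R) : (0 <= ql)%R -> (ql <= qh)%R ->
  ql%:E <= \int[nu]_q (clamp ql qh q)%:E <= qh%:E.
Proof.
move=> l0 lh.
have mc := mclamp ql qh.
have c0 q : 0 <= (clamp ql qh q)%:E by rewrite lee_fin (le_trans l0) // clamp_ge.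
apply/andP; split.
  rewrite -{1}(int_cst_prob nu ql); apply: ge0_le_integral => //.
  all: try (by move=> x _; rewrite lee_fin).
  by move=> x _; rewrite lee_fin clamp_ge.
rewrite -{1}(int_cst_prob nu qh); apply: ge0_le_integral => //.
all: try (by move=> x _; rewrite lee_fin (le_trans l0)).
by move=> x _; rewrite lee_fin clamp_le.
Qed.

Lemma pmean_bounds (ql qh : R) (nu : probability R R) : (0 <= ql)%R -> (ql <= qh)%R ->
  nu `[ql, qh]%classic = 1 ->
  \int[nu]_q (clamp ql qh q)%:E = (pmean nu)%:E /\ (ql <= pmean nu <= qh)%R.
Proof.
move=> l0 lh h1.
have /andP[b1 b2] := clamp_bounds nu l0 lh.
have fin : \int[nu]_q (clamp ql qh q)%:E \is a fin_num.
  by rewrite fin_numElt (lt_le_trans _ b1) ?ltNyr // (le_lt_trans b2) ?ltry.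
have E : \int[nu]_q (clamp ql qh q)%:E = (pmean nu)%:E.
  by rewrite /pmean (pmean_clamp h1) fineK.
by split => //; rewrite -!lee_fin -E b1 b2.
Qed.
End Clamp.


Unset Implicit Arguments.
Set Strict Implicit.

Theorem lemma15
  (R : realType) (ql qh c : R) (F f : R -> R) (p : R -> R)
  (d : measure_display) (X : measurableType d)
  (mu : probability R R) (pi : R -> probability X R)
  (muS : X -> probability R R)
  (sigma : X -> option X) (muB : option X -> probability R R) :
  (* quality space Q = [ql, qh], 0 < ql < qh, 0 < c < ql *)
  0 < ql -> ql < qh -> 0 < c -> c < ql ->
  (* F: distribution on [0,1], density f > 0 and C^2 on (0,1) *)
  cdf_with_density F f ->
  positive_C2_on01 f ->
  (* psi'(v) > 0 whenever psi(v) > 0 *)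
  (forall v, 0 < v < 1 -> 0 < psi F f v -> 0 < derive1 (psi F f) v) ->
  (* p(q) is the unique maximizer of (p - c)(1 - F(p/q)) *)
  (forall q, ql <= q <= qh -> unique_maximizer F c q (p q)) ->
  (* prior mu in Delta(Q) with support Q *)
  support_is mu ql qh ->
  (* Seller's information structure: a Markov kernel Q -> Delta(X) *)
  (forall B, measurable B -> measurable_fun `[ql, qh]%classic (fun q => pi q B)) ->
  (* Bayesian posteriors muS : X -> Delta(Q) (a version of the disintegration) *)
  (forall x, muS x `[ql, qh]%classic = 1%E) ->
  (forall A, measurable A -> measurable_fun setT (fun x => muS x A)) ->
  (forall A B, measurable A -> measurable B ->
     (\int[mu]_(q in `[ql, qh]%classic `&` A) pi q B)%E
     = marg_int ql qh mu pi B (fun x => muS x A)) ->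
  (* disclosure strategy: sigma x in {x, none}, measurable *)
  (forall x, sigma x = Some x \/ sigma x = None) ->
  measurable [set x | sigma x = None] ->
  (* Buyer's beliefs lie in Delta(Q) *)
  (forall m, muB m `[ql, qh]%classic = 1%E) ->
  (* equilibrium condition (i): sigma x maximizes R(q^B_m) over m in {x, none} *)
  (forall x,
     revenue F c p (pmean (muB (Some x))) <= revenue F c p (pmean (muB (sigma x))) /\
     revenue F c p (pmean (muB None)) <= revenue F c p (pmean (muB (sigma x)))) ->
  (* equilibrium condition (ii) *)
  (forall x, muB (Some x) = muS x) ->
  ((0 < marg ql qh mu pi [set x | sigma x = None])%E ->
     forall A, measurable A ->
       (muB None A * marg ql qh mu pi [set x | sigma x = None])%E
       = marg_int ql qh mu pi [set x | sigma x = None] (fun x => muS x A)) ->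
  (* conclusion *)
  exists qs, ql <= qs <= qh /\
    exists N : set X, measurable N /\ marg ql qh mu pi N = 0%E /\
      (forall x, sigma x = None -> pmean (muB (Some x)) <> qs -> N x).
Proof.
move=> ql0 lqh c0 cql hF hf _ um hsupp mpi hmuS mmuS _ _ mD hB heq hBS hii.
pose Q : set R := `[ql, qh]%classic.
have mQ : measurable Q by exact: measurable_itv.
have l0 : 0 <= ql := ltW ql0.
have lh : ql <= qh := ltW lqh.
set D := [set x | sigma x = None] in mD hii *.
pose pi2 q : measure X R := if q \in Q then (pi q : measure X R) else mzero.
have pi2E q : q \in Q -> pi2 q = pi q by rewrite /pi2 => ->.
have mpi2 U : measurable U -> measurable_fun setT (fun q => pi2 q U).
  move=> mU; have := (measurable_restrictT (fun q => pi q U) mQ).1 (mpi U mU).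
  apply: eq_measurable_fun => q _; rewrite /pi2 /patch; by case: ifP.
set margD := marg ql qh mu pi D.
have margD0 : (0 <= margD)%E by apply: integral_ge0.
have [mpos|mle] := ltP 0%E margD; last first.
  exists ql; split; first by rewrite lexx lh.
  exists D; split => //; split; first by apply/le_anti; rewrite mle margD0.
  by [].
have hii' := hii mpos.
set qs := pmean (muB None).
have [qsE qsQ] := pmean_bounds l0 lh (hB None).
exists qs; split => //.
pose qx x := pmean (muS x).
have qxP x := pmean_bounds l0 lh (hmuS x).
have qxle x : D x -> qx x <= qs.
  move=> Dx; have [h2 _] := heq x; move: h2; rewrite (Dx : sigma x = None) hBS => h2.
  exact: (rev_le_le hF hf c0 cql um (qxP x).2 qsQ h2).
have cl0 q : (0 <= (clamp ql qh q)%:E)%E by rewrite lee_fin (le_trans l0) // clamp_ge.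
have mg : measurable_fun setT (fun x => \int[muS x]_q (clamp ql qh q)%:E)%E.
  exact: (measurable_fun_integral_kernel (l := fun x => (muS x : measure R R)) mmuS cl0 (mclamp ql qh)).
have mqx : measurable_fun setT qx.
  have : measurable_fun setT (fun x => fine (\int[muS x]_q (clamp ql qh q)%:E)%E).
    exact: (measurableT_comp (fine_measurable measurableT) mg).
  by apply: eq_measurable_fun => x _; rewrite (qxP x).1.
have margD1 : (margD <= 1)%E.
  have -> : (1 = \int[mu]_(q in Q) (cst 1%E q))%E.
    rewrite integral_cst // mul1e; exact/esym/(hsupp.1).
  apply: ge0_le_integral => //.
  - exact: mpi.
  - by move=> q _; exact: probability_le1.
have margfin : margD \is a fin_num.
  by rewrite ge0_fin_numE // (le_lt_trans margD1) ?ltry.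
set k := fine margD.
have k0 : 0 <= k by rewrite fine_ge0.
have kE : margD = k%:E by rewrite fineK.
have intpi2 (G : measure X R -> \bar R) :
    (\int[mu]_(q in Q) G (pi q) = \int[mu]_(q in Q) G (pi2 q))%E.
  by apply: eq_integral => q qQ; rewrite pi2E.
have hnu U : measurable U -> mscale (NngNum k0) (muB None) U =
    (\int[mu]_(y in Q) \int[pi2 y]_(x in D) muS x U)%E.
  move=> mU; rewrite /mscale /= -kE muleC -/margD.
  rewrite /margD hii' // /marg_int.
  exact: (intpi2 (fun m => \int[m]_(x in D) muS x U)%E).
have hmix := mix2 mpi2 mmuS mQ mD hnu cl0 (mclamp ql qh).
have LE : (\int[mscale (NngNum k0) (muB None)]_q (clamp ql qh q)%:E = k%:E * qs%:E)%E.
  rewrite ge0_integral_mscale //; last exact: mclamp.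
  exact: (f_equal2 (fun a b => (a * b)%E) erefl qsE).
rewrite LE in hmix.
have RE : (\int[mu]_(y in Q) \int[pi2 y]_(x in D) \int[muS x]_z (clamp ql qh z)%:E =
    \int[mu]_(y in Q) \int[pi2 y]_(x in D) (qx x)%:E)%E.
  apply: eq_integral => y _; apply: eq_integral => x _; exact: (qxP x).1.
rewrite RE {RE LE} in hmix.
pose kk x := (Num.max (qs - qx x) 0)%:E.
have kk0 x : (0 <= kk x)%E by rewrite lee_fin le_max lexx orbT.
have mkk : measurable_fun setT kk.
  apply/measurable_EFinP.
  have -> : (fun x => Num.max (qs - qx x) 0) = ((cst qs \- qx) \max cst 0) by [].
  by apply: measurable_maxr => //; apply: measurable_funB.
have qx0 x : (0 <= (qx x)%:E)%E by rewrite lee_fin (le_trans l0) // (andP (qxP x).2).1.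
have mqxE : measurable_fun setT (fun x => (qx x)%:E) by exact/measurable_EFinP.
have mA : measurable_fun setT (fun q => \int[pi2 q]_(x in D) (qx x)%:E)%E.
  exact: (mker mpi2 mD qx0 mqxE).
have mB : measurable_fun setT (fun q => \int[pi2 q]_(x in D) kk x)%E.
  exact: (mker mpi2 mD kk0 mkk).
have splitD q : (\int[pi2 q]_(x in D) qs%:E =
    \int[pi2 q]_(x in D) (qx x)%:E + \int[pi2 q]_(x in D) kk x)%E.
  rewrite -ge0_integralD //; last 2 first.
  - exact: measurable_funTS.
  - exact: measurable_funTS.
  apply: eq_integral => x /[1!inE] Dx.
  by rewrite /kk -EFinD max_l ?subr_ge0 ?qxle // addrC subrK.
have total : (\int[mu]_(q in Q) \int[pi2 q]_(x in D) qs%:E = qs%:E * k%:E)%E.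
  under eq_integral do rewrite integral_cst //.
  rewrite ge0_integralZl //; last 2 first.
  - exact: measurable_funTS (mpi2 D mD).
  - by rewrite lee_fin (le_trans l0) // (andP qsQ).1.
  by rewrite -kE /margD /marg (intpi2 (fun m => m D)).
have Bint0 : (\int[mu]_(q in Q) \int[pi2 q]_(x in D) kk x = 0)%E.
  move: total.
  rewrite (eq_integral (fun q => (\int[pi2 q]_(x in D) (qx x)%:E + \int[pi2 q]_(x in D) kk x)%E)); last first.
    by move=> q _; exact: splitD.
  rewrite ge0_integralD //; last 4 first.
  - by move=> q _; apply: integral_ge0.
  - exact: measurable_funTS.
  - by move=> q _; apply: integral_ge0.
  - exact: measurable_funTS.
  rewrite -hmix => h.
  set B := (\int[mu]_(q in Q) \int[pi2 q]_(x in D) kk x)%E in h *.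
  have fin : (k%:E * qs%:E)%E \is a fin_num by [].
  have -> : B = (k%:E * qs%:E + B - k%:E * qs%:E)%E by rewrite addeAC subee // add0e.
  by rewrite h muleC subee.
pose N := D `&` [set x | qx x != qs].
have mN : measurable N.
  apply: measurableI => //.
  have -> : [set x | qx x != qs] = qx @^-1` (~` [set qs]).
    by apply/seteqP; split => x /= /eqP.
  rewrite -[X in measurable X]setTI; apply: mqx => //.
  by apply: measurableC.
exists N; split => //; split; last first.
  by move=> x Dx hne; split => //; apply/eqP; rewrite hBS in hne.
have Gae : ae_eq mu Q (fun q => \int[pi2 q]_(x in D) kk x)%E (cst 0%E).
  apply/(ae_eq_integral_abs mu mQ (measurable_funTS mB)).
  rewrite -Bint0; apply: eq_integral => q _; rewrite gee0_abs //; exact: integral_ge0.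
have [M [mM M0 sM]] := Gae.
have piN q : Q q -> ~ M q -> pi2 q N = 0%E.
  move=> Qq nMq.
  have G0 : (\int[pi2 q]_(x in D) kk x = 0)%E.
    apply: contrapT => hn; apply: nMq; apply: sM => /= h; apply: hn; exact: h Qq.
  have : ae_eq (pi2 q) D kk (cst 0%E).
    apply/(ae_eq_integral_abs (pi2 q) mD (measurable_funTS mkk)).
    rewrite -G0; apply: eq_integral => x _; rewrite gee0_abs //.
  move=> [M' [mM' M'0 sM']].
  apply/eqP; rewrite -measure_le0 -M'0; apply: le_measure; rewrite ?inE //.
  move=> x [Dx nx]; apply: sM' => /= h; have := h Dx; rewrite /kk => hk.
  have hm : Num.max (qs - qx x) 0 = 0 by case: hk.
  have : qs - qx x <= 0 by rewrite -hm le_max lexx.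
  move: nx; rewrite /= => /eqP nx hle; apply: nx; apply/eqP; rewrite eq_le qxle //.
  by rewrite -subr_le0.
rewrite /marg (intpi2 (fun m => m N)).
transitivity (\int[mu]_(q in Q) (cst 0%E q))%E; last by rewrite integral0.
apply: ae_eq_integral => //.
- exact: measurable_funTS (mpi2 N mN).
- exists M; split => //; move=> q /= h; apply: contrapT => nMq; apply: h => Qq; exact: piN.
Qed.
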